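(* Let $\phi\colon\mathcal{A}^+\to\mathcal{C}^+$ and $\tau\colon\mathcal{B}^+\to\mathcal{C}^+$ be morphisms such that $\tau$ is $\ell$-proper with $\ell\ge|\phi|_1^4$, and $\phi(\mathcal{A}^+)\cap\tau(\mathcal{B}^{++})\neq\emptyset$. Then there exist an alphabet $\mathcal{D}$ and morphisms $q\colon\mathcal{B}^+\to\mathcal{D}^+$, $p\colon\mathcal{D}^+\to\mathcal{C}^+$ such that (i) $\#\mathcal{D}\le\#\mathcal{A}$, (ii) $\tau=pq$, and (iii) $q$ is letter-onto and proper.
   Context: Alphabets are finite sets; $\mathcal{A}^+$ is the free semigroup of nonempty finite words over $\mathcal{A}$, and a morphism is a semigroup homomorphism. $\mathcal{B}^{++}$ denotes the set of words in $\mathcal{B}^+$ in which every letter of $\mathcal{B}$ occurs. For a morphism $\sigma\colon\mathcal{A}^+\to\mathcal{B}^+$, $|\sigma|_1=\sum_{a\in\mathcal{A}}|\sigma(a)|$. $\sigma$ is $r$-proper if there exist $u,v\in\mathcal{B}^r$ such that every $\sigma(a)$, $a\in\mathcal{A}$, starts with $u$ and ends with $v$; proper means $1$-proper; letter-onto means every $b\in\mathcal{B}$ occurs in some $\sigma(a)$. *)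

(* Defs.v *)
From mathcomp Require Import all_boot.
Set Implicit Arguments. Unset Strict Implicit. Unset Printing Implicit Defensive.

(* A morphism A^+ -> C^+ is given by the images of the letters; it is a
   semigroup homomorphism of the free semigroups iff every image is nonempty. *)
Definition is_morphism (A C : finType) (s : A -> seq C) : Prop :=
  forall a : A, s a != [::].

Definition mapw (A C : finType) (s : A -> seq C) (w : seq A) : seq C :=
  flatten (map s w).

Definition size1 (A C : finType) (s : A -> seq C) : nat :=
  \sum_(a : A) size (s a).

Definition in_plus (A : finType) (w : seq A) : Prop := w != [::].

Definition in_plusplus (B : finType) (w : seq B) : Prop :=
  w != [::] /\ forall b : B, b \in w.

Definition r_proper (A C : finType) (r : nat) (s : A -> seq C) : Prop :=
  exists u v : seq C, [/\ size u = r, size v = r &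
    forall a : A, prefix u (s a) /\ suffix v (s a)].

Definition proper_morph (A C : finType) (s : A -> seq C) : Prop := r_proper 1 s.

Definition letter_onto (A C : finType) (s : A -> seq C) : Prop :=
  forall c : C, exists a : A, c \in s a.

(* Main.v *)
Require Import Defs.
From mathcomp Require Import all_boot.
From mathcomp Require Import zify.
From Stdlib Require Import Classical_Prop.
Set Implicit Arguments. Unset Strict Implicit. Unset Printing Implicit Defensive.

Section Words.
Variable T : eqType.
Implicit Types (X Y : seq (seq T)) (w a b c x : seq T).

Lemma catsI_ a b c : a ++ b = a ++ c -> b = c.
Proof. by move=> H; have := congr1 (drop (size a)) H; rewrite !drop_size_cat. Qed.

Lemma catIs_ a b c : a ++ c = b ++ c -> a = b.
Proof.
move=> H; have Hs : size a = size b by have := congr1 size H; rewrite !size_cat; lia.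
by have := congr1 (take (size a)) H; rewrite take_size_cat // Hs take_size_cat.
Qed.

Lemma pre_cmp a1 r1 a2 r2 : a1 ++ r1 = a2 ++ r2 -> size a1 <= size a2 ->
  exists d, a2 = a1 ++ d.
Proof.
move=> H Hs; exists (drop (size a1) a2).
have := congr1 (take (size a1)) H; rewrite take_size_cat // takel_cat // => E.
by rewrite {1}E cat_take_drop.
Qed.

Lemma suf_cmp a1 r1 a2 r2 : r1 ++ a1 = r2 ++ a2 -> size a1 <= size a2 ->
  exists d, a2 = d ++ a1.
Proof.
move=> H Hs; have H' : rev a1 ++ rev r1 = rev a2 ++ rev r2 by rewrite -!rev_cat H.
have := pre_cmp H'; rewrite !size_rev => /(_ Hs) [d Hd].
by exists (rev d); rewrite -(revK a2) Hd rev_cat revK.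
Qed.

Definition sumlen X := sumn (map size X).
Definition gen Y w := exists s, all (fun z => z \in Y) s /\ flatten s = w.
Definition reducible X := exists Y, [/\ size Y <= size X, sumlen Y < sumlen X,
  [::] \notin Y & forall x, x \in X -> gen Y x].

Lemma gen1 Y x : x \in Y -> gen Y x.
Proof. by move=> H; exists [:: x]; rewrite /= H cats0. Qed.

Lemma gen_cat Y a b : gen Y a -> gen Y b -> gen Y (a ++ b).
Proof.
move=> [s1 [H1 E1]] [s2 [H2 E2]]; exists (s1 ++ s2).
by rewrite all_cat H1 H2 flatten_cat E1 E2.
Qed.

Lemma gen_nil Y : gen Y [::].
Proof. by exists [::]. Qed.

Lemma gen_trans X Y w : (forall x, x \in X -> gen Y x) -> gen X w -> gen Y w.
Proof.
move=> HX [s [Hs <-]]; elim: s Hs => [|z s IH] /=; first by move=> _; exact: gen_nil.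
by move=> /andP[Hz Hs]; apply: gen_cat; [exact: HX | exact: IH].
Qed.

Lemma gen_all X s : all (fun z => z \in X) s -> gen X (flatten s).
Proof. by move=> H; exists s. Qed.

Lemma sumlen_cons x X : sumlen (x :: X) = size x + sumlen X.
Proof. by []. Qed.

Lemma sumlen_filter_le X (P : pred (seq T)) : sumlen (filter P X) <= sumlen X.
Proof. elim: X => [|z X IH] //=; case: ifP => _; rewrite /sumlen /= in IH *; lia. Qed.

Lemma sumlen_filter X x : x \in X ->
  sumlen (filter (predC1 x) X) + size x <= sumlen X.
Proof.
elim: X => [|z X IH] //=; rewrite in_cons => /orP[/eqP <-|H].
  rewrite eqxx /=; have := sumlen_filter_le X (predC1 x); rewrite /sumlen /=; lia.
have := IH H; case: ifP => _; rewrite /sumlen /=; lia.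
Qed.

Lemma size_filter_lt X x : x \in X -> size (filter (predC1 x) X) < size X.
Proof.
elim: X => [|z X IH] //=; rewrite in_cons => /orP[/eqP <-|H].
  rewrite eqxx /= ltnS size_filter; exact: count_size.
have := IH H; case: ifP => _ /=; lia.
Qed.

Lemma mem_filterC1 X x z : z \in X -> z != x -> z \in filter (predC1 x) X.
Proof. by move=> H1 H2; rewrite mem_filter /= H2. Qed.

Lemma reduce_gen X x c : x \in X -> [::] \notin X -> c != [::] -> size c < size x ->
  gen (c :: filter (predC1 x) X) x -> reducible X.
Proof.
move=> Hx H0 Hc Hlt Hg; exists (c :: filter (predC1 x) X); split.
- by have := size_filter_lt Hx; rewrite /=; lia.
- by have := sumlen_filter Hx; rewrite sumlen_cons; lia.
- rewrite in_cons negb_or eq_sym Hc /= mem_filter negb_and.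
  by rewrite H0 orbT.
- move=> z Hz; case: (eqVneq z x) => [->|Hzx] //.
  by apply: gen1; rewrite in_cons mem_filterC1 ?orbT.
Qed.

Lemma reduce_split X x a b : x \in X -> [::] \notin X -> x = a ++ b ->
  a != [::] -> b != [::] -> [\/ a \in X, b \in X | a = b] -> reducible X.
Proof.
move=> Hx H0 E Ha Hb Hc.
have sa : 0 < size a by case: a Ha {E Hc}.
have sb : 0 < size b by case: b Hb {E Hc}.
have Hsx : size x = size a + size b by rewrite E size_cat.
case: Hc => [HA|HB|Eab].
- apply: (@reduce_gen X x b Hx H0) => //; first lia.
  rewrite E; apply: gen_cat; apply: gen1; last by rewrite in_cons eqxx.
  rewrite in_cons mem_filterC1 ?orbT //; apply/eqP => Ea.
  by have := congr1 size Ea; rewrite ?size_cat; lia.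
- apply: (@reduce_gen X x a Hx H0) => //; first lia.
  rewrite E; apply: gen_cat; apply: gen1; first by rewrite in_cons eqxx.
  rewrite in_cons mem_filterC1 ?orbT //; apply/eqP => Ea.
  by have := congr1 size Ea; rewrite ?size_cat; lia.
- apply: (@reduce_gen X x a Hx H0) => //; first lia.
  by rewrite E -Eab; apply: gen_cat; apply: gen1; rewrite in_cons eqxx.
Qed.


Lemma size_le_sumlen X x : x \in X -> size x <= sumlen X.
Proof.
elim: X => [|z X IH] //; rewrite in_cons sumlen_cons => /orP[/eqP ->|H]; first lia.
by have := IH H; lia.
Qed.

Lemma in_filterC1 X x z : z \in filter (predC1 x) X -> z \in X /\ z != x.
Proof. by rewrite mem_filter => /andP[/= -> ->]. Qed.

Definition subst_f (x1 y1 t z : seq T) : seq (seq T) :=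
  if z == x1 then [:: y1; t] else [:: z].

Lemma flatten_subst x1 y1 t r : x1 = y1 ++ t ->
  flatten (flatten (map (subst_f x1 y1 t) r)) = flatten r.
Proof.
move=> E; elim: r => [|z r IH] //=; rewrite flatten_cat IH /subst_f.
by case: eqP => [->|_] //=; rewrite cats0 ?E ?catA.
Qed.

Lemma all_subst x1 y1 t r (P : pred (seq T)) :
  P y1 -> P t -> (forall z, z \in r -> z != x1 -> P z) ->
  all P (flatten (map (subst_f x1 y1 t) r)).
Proof.
move=> Py Pt Hr; elim: r Hr => [|z r IH] Hr //=; rewrite all_cat IH; last first.
  by move=> w Hw; apply: Hr; rewrite in_cons Hw orbT.
rewrite /subst_f; case: eqP => [_|/eqP Hz] /=; first by rewrite Py Pt.
by rewrite Hr // in_cons eqxx.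
Qed.

Lemma defect n X s1 s2 : sumlen X <= n -> [::] \notin X ->
  all (fun z => z \in X) s1 -> all (fun z => z \in X) s2 ->
  flatten s1 = flatten s2 -> s1 != [::] -> s2 != [::] ->
  head [::] s1 != head [::] s2 ->
  exists Y, [/\ size Y < size X, sumlen Y < sumlen X, [::] \notin Y &
    forall x, x \in X -> gen Y x].
Proof.
elim: n X s1 s2 => [|n IH] X s1 s2.
  case: s1 => [|x1 r1] //= Hn H0 /andP[Hx1 _].
  have := size_le_sumlen Hx1; case: x1 Hx1 => [|c x1] Hx1; first by rewrite Hx1 in H0.
  by move=> /=; lia.
move=> Hn H0.
wlog Hle : s1 s2 / size (head [::] s2) <= size (head [::] s1).
  move=> Hw A1 A2 E N1 N2 Nh; case: (leqP (size (head [::] s2)) (size (head [::] s1))) => Hs.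
    exact: (Hw s1 s2 Hs A1 A2 E N1 N2 Nh).
  by apply: (Hw s2 s1 (ltnW Hs) A2 A1 (esym E) N2 N1); rewrite eq_sym.
move=> A1 A2 E N1 N2 Nh.
case: s1 Hle A1 E N1 Nh => [|x1 r1] // Hle A1 E _ Nh.
case: s2 Hle A2 E N2 Nh => [|y1 r2] // Hle A2 E _ Nh.
rewrite /= in Hle A1 A2 E Nh; move/andP: A1 => [Hx1 A1]; move/andP: A2 => [Hy1 A2].
have [t Et] := pre_cmp (esym E) Hle.
have Ht : t ++ flatten r1 = flatten r2 by apply: (@catsI_ y1); rewrite catA -Et.
have tn : t != [::] by apply: contra Nh => /eqP tn; rewrite Et tn cats0.
have y1n : y1 != [::] by apply: contraNneq H0 => <-.
have sy : 0 < size y1 by case: y1 y1n {Hy1 Et E Hle Nh}.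
have st : 0 < size t by case: t tn {Et Ht}.
have sx : size x1 = size y1 + size t by rewrite Et size_cat.
have y1F : y1 \in filter (predC1 x1) X by rewrite mem_filterC1 // eq_sym.
have Hsf := sumlen_filter Hx1; have Hzf := size_filter_lt Hx1.
have H0F : [::] \notin filter (predC1 x1) X.
  by apply: contra H0 => /in_filterC1 [].
case: (boolP (t \in filter (predC1 x1) X)) => tF.
  exists (filter (predC1 x1) X); split => //; first lia.
  move=> z Hz; case: (eqVneq z x1) => [->|Hzx]; last by apply: gen1; rewrite mem_filterC1.
  suff : gen (filter (predC1 x1) X) (y1 ++ t) by rewrite -Et.
  by apply: gen_cat; apply: gen1.
set F := filter (predC1 x1) X.
have H0' : [::] \notin t :: F by rewrite in_cons negb_or eq_sym tn.
case: r2 A2 Ht E Nh => [|r2' r] A2 Ht E Nh.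
  have := congr1 size Ht; rewrite size_cat /= => /eqP; rewrite addn_eq0 => /andP[/eqP st0 _].
  by rewrite st0 in st.
have IH' := IH (t :: F) (t :: flatten (map (subst_f x1 y1 t) r1))
  (flatten (map (subst_f x1 y1 t) (r2' :: r))).
have Hs1 : sumlen (t :: F) <= n.
  rewrite sumlen_cons; move: Hsf Hn sx sy; rewrite -/F; clear; lia.
have Ha1 : all (fun z => z \in t :: F) (t :: flatten (map (subst_f x1 y1 t) r1)).
  rewrite /= in_cons eqxx /=; apply: all_subst.
  + by rewrite in_cons y1F orbT.
  + by rewrite in_cons eqxx.
  + move=> w Hw Hwx; rewrite in_cons mem_filterC1 ?orbT //.
    by move/allP: A1; apply.
have Ha2 : all (fun z => z \in t :: F) (flatten (map (subst_f x1 y1 t) (r2' :: r))).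
  apply: (@all_subst x1 y1 t (r2' :: r) (fun z => z \in t :: F)).
  + by rewrite in_cons y1F orbT.
  + by rewrite in_cons eqxx.
  + move=> w Hw Hwx; rewrite in_cons mem_filterC1 ?orbT //.
    by move/allP: A2; apply.
have Hfl : flatten (t :: flatten (map (subst_f x1 y1 t) r1)) =
   flatten (flatten (map (subst_f x1 y1 t) (r2' :: r))).
  rewrite (flatten_subst (r2' :: r) Et) -Ht.
  by rewrite -[in RHS](flatten_subst r1 Et).
have Hn2 : flatten (map (subst_f x1 y1 t) (r2' :: r)) != [::].
  by rewrite /= /subst_f; case: (r2' == x1).
have Hh : head [::] (t :: flatten (map (subst_f x1 y1 t) r1)) !=
   head [::] (flatten (map (subst_f x1 y1 t) (r2' :: r))).
  rewrite /= /subst_f; case: ifP => Hz /=.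
    by apply/eqP => E'; move: tF; rewrite E' y1F.
  apply/eqP => E'; move: tF; rewrite E' mem_filterC1 ?Hz //.
  by move: A2 => /= /andP[].
have [Y [HY1 HY2 HY3 HY4]] := IH' Hs1 H0' Ha1 Ha2 Hfl isT Hn2 Hh.
exists Y; split => //.
- by move: HY1 Hzf; rewrite /= -/F; clear; lia.
- by move: HY2 Hsf sx sy; rewrite sumlen_cons -/F; clear; lia.
- move=> w Hw; case: (eqVneq w x1) => [->|Hwx].
    suff : gen Y (y1 ++ t) by rewrite -Et.
    by apply: gen_cat; apply: HY4; rewrite in_cons ?eqxx ?y1F ?orbT.
  by apply: HY4; rewrite in_cons mem_filterC1 ?orbT.
Qed.

End Words.

Section Words2.
Variable T : eqType.
Implicit Types (X Y : seq (seq T)) (w a b c x : seq T).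

Lemma rel_reduce X x' b d (w1 w2 e : seq (seq T)) : [::] \notin X -> x' \in X -> x' = b ++ d ->
  b != [::] -> d != [::] -> all (fun z => z \in X) w1 -> all (fun z => z \in X) w2 ->
  w1 != [::] -> (e = [::] \/ e = [:: d]) -> flatten (w1 ++ e) = flatten (d :: w2) ->
  reducible X.
Proof.
move=> H0 Hx E bn dn A1 A2 w1n He Hrel.
case: (boolP (d \in X)) => dX; first by apply: (reduce_split Hx H0 E) => //; apply: Or32.
case: (eqVneq b d) => Ebd; first by apply: (reduce_split Hx H0 E) => //; apply: Or33.
set F := filter (predC1 x') X.
have Hsf := sumlen_filter Hx; have Hzf := size_filter_lt Hx.
have sx : size x' = size b + size d by rewrite E size_cat.
have H0' : [::] \notin [:: b, d & F].
  rewrite !in_cons !negb_or ![[::] == _]eq_sym bn dn /=.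
  by apply: contra H0 => /in_filterC1 [].
have PF : forall z, z \in X -> z != x' -> z \in [:: b, d & F].
  by move=> z Hz Hzx; rewrite !in_cons mem_filterC1 ?orbT.
have Pb : b \in [:: b, d & F] by rewrite in_cons eqxx.
have Pd : d \in [:: b, d & F] by rewrite !in_cons eqxx orbT.
have Ha1 : all (fun z => z \in [:: b, d & F]) (flatten (map (subst_f x' b d) w1) ++ e).
  rewrite all_cat; apply/andP; split.
    apply: (@all_subst _ x' b d w1 (fun z => z \in [:: b, d & F])) => // z Hz Hzx.
    by apply: PF => //; move/allP: A1; apply.
  by case: He => ->; rewrite /= ?Pd.
have Ha2 : all (fun z => z \in [:: b, d & F]) (d :: flatten (map (subst_f x' b d) w2)).
  rewrite /= Pd /=.
  apply: (@all_subst _ x' b d w2 (fun z => z \in [:: b, d & F])) => // z Hz Hzx.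
  by apply: PF => //; move/allP: A2; apply.
have Hfl : flatten (flatten (map (subst_f x' b d) w1) ++ e) =
           flatten (d :: flatten (map (subst_f x' b d) w2)).
  rewrite flatten_cat (flatten_subst w1 E) -flatten_cat Hrel /=.
  by rewrite (flatten_subst w2 E).
case: w1 A1 w1n Ha1 Hfl {Hrel} => [|z w1] // A1 _ Ha1 Hfl.
have Hn1 : flatten (map (subst_f x' b d) (z :: w1)) ++ e != [::].
  by rewrite /= /subst_f; case: (z == x').
have Hh : head [::] (flatten (map (subst_f x' b d) (z :: w1)) ++ e) !=
          head [::] (d :: flatten (map (subst_f x' b d) w2)).
  rewrite /= /subst_f; case: ifP => Hz /=; first by [].
  apply/eqP => Ez; move: dX; rewrite -Ez.
  by move: A1 => /= /andP[-> _].
have [Y [HY1 HY2 HY3 HY4]] :=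
  defect (leqnn _) H0' Ha1 Ha2 Hfl Hn1 isT Hh.
exists Y; split => //.
- by move: HY1 Hzf; rewrite /= -/F; clear; lia.
- by move: HY2 Hsf sx; rewrite !sumlen_cons -/F; clear; lia.
- move=> w Hw; case: (eqVneq w x') => [->|Hwx]; last by apply: HY4; apply: PF.
  suff : gen Y (b ++ d) by rewrite -E.
  by apply: gen_cat; apply: HY4.
Qed.

Lemma flatten_cut (t : seq (seq T)) P R : flatten t = P ++ R ->
  (exists i, P = flatten (take i t) /\ R = flatten (drop i t)) \/
  (exists i b g, [/\ i < size t, nth [::] t i = b ++ g, b != [::], g != [::] &
     P = flatten (take i t) ++ b /\ R = g ++ flatten (drop i.+1 t)]).
Proof.
elim: t P => [|z t IH] P /=.
  by case: P => [|? ?] //= <-; left; exists 0.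
move=> E; case: (eqVneq P [::]) => [EP|Pn].
  by left; exists 0; split; [rewrite EP | rewrite drop0 /= E EP].
case: (ltnP (size P) (size z)) => Hs.
  have HP : P = take (size P) z.
    by have := congr1 (take (size P)) E; rewrite takel_cat ?take_size_cat // ltnW.
  right; exists 0, P, (drop (size P) z); split => //.
  - by rewrite {1}HP cat_take_drop.
  - by rewrite -size_eq0 size_drop; lia.
  - split => //; have := congr1 (drop (size P)) E.
    by rewrite (@drop_size_cat _ (size P) P R erefl) drop_cat Hs drop0 => <-.
have [P' EP] : exists P', P = z ++ P'.
  by have [d Hd] := pre_cmp E Hs; exists d.
have E' : flatten t = P' ++ R by apply: (@catsI_ _ z); rewrite catA -EP.
case: (IH _ E') => [[i [H1 H2]]|[i [b [g [Hi Hn Hb Hg [H1 H2]]]]]].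
  by left; exists i.+1; rewrite /= EP H1.
by right; exists i.+1, b, g; split => //; rewrite /= EP H1 catA.
Qed.

End Words2.

Section Sync.
Variable T : eqType.
Implicit Types (X Y : seq (seq T)).

Lemma all_take_ (P : pred (seq T)) n (s : seq (seq T)) : all P s -> all P (take n s).
Proof. by move=> /allP H; apply/allP => z /mem_take; apply: H. Qed.

Lemma all_drop_ (P : pred (seq T)) n (s : seq (seq T)) : all P s -> all P (drop n s).
Proof. by move=> /allP H; apply/allP => z /mem_drop; apply: H. Qed.

Lemma flat_bound X (s : seq (seq T)) : all (fun z => z \in X) s ->
  size (flatten s) <= size s * sumlen X.
Proof.
elim: s => [|z s IH] //= /andP[Hz Hs]; rewrite size_cat mulSn.
by apply: leq_add; [apply: size_le_sumlen | apply: IH].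
Qed.

Definition psuf X (g : seq T) :=
  g != [::] /\ exists x b, [/\ x \in X, b != [::] & x = b ++ g].

Definition sufs X := flatten [seq [seq drop o x | o <- iota 1 (size x).-1] | x <- X].

Lemma psuf_sufs X g : psuf X g -> g \in sufs X.
Proof.
move=> [gn [x [b [Hx bn E]]]]; apply/flatten_mapP; exists x => //.
apply/mapP; exists (size b); last by rewrite E drop_size_cat.
have sb : 0 < size b by case: b bn {E}.
have sg : 0 < size g by case: g gn {E}.
by rewrite mem_iota E size_cat; lia.
Qed.

Lemma size_sufs X : [::] \notin X -> size (sufs X) + size X <= sumlen X.
Proof.
elim: X => [|x X IH] //; rewrite in_cons negb_or => /andP[xn H0].
rewrite /sufs /= size_cat size_map size_iota -/(sufs X) sumlen_cons.
have := IH H0; have : 0 < size x by case: x xn.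
lia.
Qed.

Lemma sync X s1 s2 xa b a l : ~ reducible X -> [::] \notin X ->
  all (fun z => z \in X) s1 -> all (fun z => z \in X) s2 ->
  xa \in X -> xa = b ++ a -> b != [::] -> a != [::] ->
  sumlen X * sumlen X <= l -> l <= size (flatten s1) ->
  take l (flatten s1) = take l (a ++ flatten s2) -> False.
Proof.
move=> Hred H0 A1 A2 Hxa Exa bn an HKl Hl1 Heq.
have [K EK] : exists K, sumlen X = K by exists (sumlen X).
rewrite EK in HKl.
have HK1 : 0 < K.
  have := size_le_sumlen Hxa; rewrite Exa size_cat EK.
  by case: b bn {Exa} => //= ? ? _; lia.
have Hs1 : K <= size s1.
  rewrite leqNgt; apply/negP => H.
  have := flat_bound A1; rewrite EK => Hb.
  have H2 : size s1 * K < K * K by rewrite ltn_pmul2r.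
  by have := leq_ltn_trans (leq_trans HKl (leq_trans Hl1 Hb)) H2; rewrite ltnn.
set F := fun j => flatten (take j s1).
set U2 := a ++ flatten s2.
have HFj : forall j, j < K -> size (F j) <= l.
  move=> j Hj; apply: (leq_trans (flat_bound (all_take_ j A1))).
  rewrite EK size_takel; last exact: ltnW (leq_trans Hj Hs1).
  by apply: leq_trans HKl; apply: leq_mul => //; apply: ltnW.
have HpreU2 : forall j, j < K -> U2 = F j ++ drop (size (F j)) U2.
  move=> j Hj; rewrite -{1}(cat_take_drop (size (F j)) U2); congr (_ ++ _).
  rewrite -(take_takel _ (HFj j Hj)) -Heq take_takel ?HFj //.
  by rewrite -{1}(cat_take_drop j s1) flatten_cat take_size_cat.
have Fn : forall j, 0 < j -> j <= size s1 -> F j != [::].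
  move=> j j0 js; rewrite /F; case: s1 A1 js {Hs1 Hl1 Heq F HFj HpreU2} => [|z s].
    by move=> _; rewrite leqn0 => /eqP j00; rewrite j00 in j0.
  move=> /= /andP[Hz _] _.
  case: j j0 => [|j] //= _; apply: contraNneq H0 => Ez.
  by case: z Hz Ez => [|c w] //=.
have Step1 : forall j i, 0 < j -> j < K -> F j = a ++ flatten (take i s2) -> False.
  move=> j i j0 jK E; apply: Hred.
  apply: (@rel_reduce _ X xa b a (take j s1) (take i s2) [::]) => //.
  - exact: all_take_.
  - exact: all_take_.
  - by rewrite -size_eq0 size_takel; lia.
  - by left.
  - by rewrite cats0.
have Step2 : forall j, j < K -> exists g, psuf X g /\
    exists i, drop (size (F j)) U2 = g ++ flatten (drop i s2).
  move=> j jK; case: j jK => [|j] jK.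
    exists a; split; first by split => //; exists xa, b.
    by exists 0; rewrite /F /U2 /= take0 /= !drop0.
  have E := HpreU2 _ jK.
  case: (@flatten_cut _ (a :: s2) _ _ E) => [[i [H1 H2]]|[i [bb [g [Hi Hn Hb Hg [H1 H2]]]]]].
    case: i H1 {H2} => [|i] H1.
      by move: (Fn j.+1 isT (ltnW (leq_trans jK Hs1))); rewrite H1.
    by exfalso; apply: (Step1 _ i _ jK).
  exists g; split.
    split => //; case: i Hi Hn {H1 H2} => [|i] Hi /= Hn.
      by exists xa, (b ++ bb); split => //; [rewrite -size_eq0 size_cat; case: b bn {Exa} | rewrite Exa Hn catA].
    exists (nth [::] s2 i), bb; split => //.
    by move/allP: A2; apply; apply: mem_nth.
  case: i Hi Hn H1 H2 => [|i] Hi Hn H1 H2; first by exists 0; rewrite H2 /= drop0.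
  by exists i.+1; rewrite H2.
have [f Hf] := fin_all_exists (fun j : 'I_K => Step2 j (ltn_ord j)).
have Hinj : forall j j' : 'I_K, (j < j')%N -> f j = f j' -> False.
  move=> j j' Hjj' Ef.
  have [[gn [x [bx [Hx bxn Ex]]]] [i Di]] := Hf j.
  have [_ [i' Di']] := Hf j'; rewrite -Ef in Di'.
  set g := f j in Ex Di Di' gn.
  have jK := ltn_ord j; have j'K := ltn_ord j'.
  set M := flatten (take (j' - j) (drop j s1)).
  have EF : F j' = F j ++ M by rewrite /F /M -flatten_cat -takeD subnKC // ltnW.
  have DM : drop (size (F j)) U2 = M ++ drop (size (F j')) U2.
    by rewrite {1}(HpreU2 _ j'K) EF -catA drop_size_cat.
  have Grel : g ++ flatten (drop i s2) = M ++ g ++ flatten (drop i' s2) by rewrite -Di -Di' -DM.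
  have Mn : 0 < size M.
    have : j < size s1 by apply: leq_trans Hs1.
    move=> js; rewrite /M (drop_nth [::] js).
    have : (j' - j) = (j' - j).-1.+1 by lia.
    move=> ->; rewrite /= size_cat.
    have : nth [::] s1 j \in X by move/allP: A1; apply; apply: mem_nth.
    case: (nth [::] s1 j) => [|c w] /=; first by move=> Hin; rewrite Hin in H0.
    by move=> _; lia.
  have Hii : i <= i'.
    rewrite leqNgt; apply/negP => Hlt.
    have : flatten (drop i' s2) = flatten (take (i - i') (drop i' s2)) ++ flatten (drop i s2).
      by rewrite -flatten_cat -{2}(subnK (ltnW Hlt)) -drop_drop cat_take_drop.
    move=> EG; move: Grel; rewrite EG => /(congr1 size); rewrite !size_cat.
    by move: Mn; clear; lia.
  set N := flatten (take (i' - i) (drop i s2)).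
  have EG : flatten (drop i s2) = N ++ flatten (drop i' s2).
    by rewrite /N -flatten_cat -{2}(subnK Hii) -drop_drop cat_take_drop.
  have Hrel : g ++ N = M ++ g.
    by apply: (@catIs_ _ _ _ (flatten (drop i' s2))); rewrite -!catA -EG.
  apply: Hred.
  apply: (@rel_reduce _ X x bx g (take (j' - j) (drop j s1)) (take (i' - i) (drop i s2)) [:: g]) => //.
  - exact: all_take_ (all_drop_ _ A1).
  - exact: all_take_ (all_drop_ _ A2).
  - by rewrite -size_eq0; apply: contraTneq Mn => /eqP H; rewrite /M; case: (take _ _) H.
  - by right.
  - by rewrite flatten_cat /= cats0 -/M -Hrel.
have finj : injective f.
  move=> j j' Ef; case: (ltngtP j j') => H.
  - by exfalso; apply: (Hinj j j').
  - by exfalso; apply: (Hinj j' j).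
  - exact: val_inj.
have Hsub : {subset map f (enum 'I_K) <= sufs X}.
  move=> g /mapP[j _ ->]; apply: psuf_sufs; by have [] := Hf j.
have Hu : uniq (map f (enum 'I_K)) by rewrite map_inj_uniq // enum_uniq.
have := uniq_leq_size Hu Hsub.
rewrite size_map size_enum_ord.
have := size_sufs H0; rewrite EK.
have : 0 < size X by rewrite lt0n size_eq0; apply/eqP => EX; rewrite EX in Hxa.
move=> h1 h2 h3; have h3' : K <= size (sufs X) := h3; clear -h1 h2 h3'; lia.
Qed.

End Sync.

Lemma prefix_eq (T : eqType) (X : seq (seq T)) x1 x2 t1 t2 : ~ reducible X -> [::] \notin X ->
  x1 \in X -> x2 \in X -> x1 ++ t1 = x2 ++ t2 -> x1 = x2.
Proof.
move=> Hred H0 H1 H2.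
wlog Hs : x1 x2 t1 t2 H1 H2 / size x1 <= size x2.
  move=> Hw E; case: (leqP (size x1) (size x2)) => Hs; first exact: (Hw x1 x2 t1 t2).
  by apply: esym; apply: (Hw x2 x1 t2 t1) => //; apply: ltnW.
move=> E; have [d Ed] := pre_cmp E Hs.
case: (eqVneq d [::]) => [d0|dn]; first by rewrite Ed d0 cats0.
exfalso; apply: Hred; apply: (reduce_split H2 H0 Ed) => //; last by apply: Or31.
by apply: contraNneq H0 => <-.
Qed.

Lemma suffix_eq (T : eqType) (X : seq (seq T)) x1 x2 t1 t2 : ~ reducible X -> [::] \notin X ->
  x1 \in X -> x2 \in X -> t1 ++ x1 = t2 ++ x2 -> x1 = x2.
Proof.
move=> Hred H0 H1 H2.
wlog Hs : x1 x2 t1 t2 H1 H2 / size x1 <= size x2.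
  move=> Hw E; case: (leqP (size x1) (size x2)) => Hs; first exact: (Hw x1 x2 t1 t2).
  by apply: esym; apply: (Hw x2 x1 t2 t1) => //; apply: ltnW.
move=> E; have [d Ed] := suf_cmp E Hs.
case: (eqVneq d [::]) => [d0|dn]; first by rewrite Ed d0.
exfalso; apply: Hred; apply: (reduce_split H2 H0 Ed) => //; last by apply: Or32.
by apply: contraNneq H0 => <-.
Qed.

Lemma flat_take_split (T : Type) (s : seq (seq T)) i j : i <= j ->
  flatten (take j s) = flatten (take i s) ++ flatten (take (j - i) (drop i s)).
Proof. by move=> H; rewrite -flatten_cat -takeD subnKC. Qed.

Lemma nat_absurd (a m k : nat) : a = a + (m + k) -> 0 < m -> False.
Proof. lia. Qed.

Section Main.
Variables (B C : finType) (tau : B -> seq C) (l : nat) (u v : seq C) (y : seq B).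
Hypotheses (Htau : forall b, tau b != [::]) (Hu : size u = l) (Hv : size v = l)
  (Hpre : forall b, prefix u (tau b)) (Hsuf : forall b, suffix v (tau b))
  (Hy0 : y != [::]) (Hy : forall b, b \in y).

Definition W := flatten (map tau y).

Definition concl (n : nat) := exists (D : finType) (q : B -> seq D) (p : D -> seq C),
  [/\ is_morphism q /\ is_morphism p, #|D| <= n,
      (forall w : seq B, mapw tau w = mapw p (mapw q w)),
      letter_onto q & proper_morph q].

Lemma tauw_pre z : z != [::] -> exists r, flatten (map tau z) = u ++ r.
Proof.
case: z => [|b z] // _; have /prefixP [r Hr] := Hpre b.
by exists (r ++ flatten (map tau z)); rewrite /= Hr catA.
Qed.

Lemma cut_phi X s : ~ reducible X -> [::] \notin X -> all (fun z => z \in X) s ->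
  flatten s = W -> sumlen X * sumlen X <= l ->
  forall y1 y2, y = y1 ++ y2 -> y2 != [::] ->
  exists i, flatten (map tau y1) = flatten (take i s).
Proof.
move=> Hred H0 A Es HKl y1 y2 Ey y2n.
have E : flatten s = flatten (map tau y1) ++ flatten (map tau y2).
  by rewrite Es /W Ey map_cat flatten_cat.
case: (flatten_cut E) => [[i [H1 _]]|[i [bb [g [Hi Hn Hb Hg [H1 H2]]]]]].
  by exists i.
exfalso.
have [r Hr] := tauw_pre Hy0; rewrite -/W -Es in Hr.
have [r2 Hr2] := tauw_pre y2n; rewrite H2 in Hr2.
apply: (@sync _ X s (drop i.+1 s) (nth [::] s i) bb g l) => //.
- exact: all_drop_.
- by move/allP: A; apply; apply: mem_nth.
- by rewrite Hr size_cat Hu leq_addr.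
- by rewrite Hr Hr2 !take_size_cat.
Qed.

Lemma blocks X s : ~ reducible X -> [::] \notin X -> all (fun z => z \in X) s ->
  flatten s = W -> sumlen X * sumlen X <= l ->
  forall b, exists mid, all (fun z => z \in X) mid && (flatten mid == tau b).
Proof.
move=> Hred H0 A Es HKl b.
set k := index b y.
have Hk : k < size y by rewrite index_mem.
set y1 := take k y; set y2 := drop k.+1 y.
have Hd : drop k y = b :: drop k.+1 y by rewrite (drop_nth b Hk) nth_index.
have Ey : y = y1 ++ b :: y2 by rewrite /y1 /y2 -Hd cat_take_drop.
have [i1 E1] := cut_phi Hred H0 A Es HKl Ey isT.
have [i2 E2] : exists i2, flatten (map tau y1) ++ tau b = flatten (take i2 s).
  case: (eqVneq y2 [::]) => [y20|y2n].
    exists (size s); rewrite take_size Es /W [X in _ = flatten (map tau X)]Ey y20 map_cat flatten_cat /=.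
    by rewrite cats0.
  have Ey' : y = (y1 ++ [:: b]) ++ y2 by rewrite -catA.
  have [i2 Hi2] := cut_phi Hred H0 A Es HKl Ey' y2n.
  by exists i2; rewrite -Hi2 map_cat flatten_cat /= cats0.
have Hle : i1 <= i2.
  rewrite leqNgt; apply/negP => Hlt.
  have := flat_take_split s (ltnW Hlt); rewrite -E1 -E2 -catA => /(congr1 size).
  rewrite !size_cat; have : 0 < size (tau b) by rewrite lt0n size_eq0.
  move=> h1 h2; exact: (nat_absurd h2 h1).
exists (take (i2 - i1) (drop i1 s)); apply/andP; split.
  exact: all_take_ (all_drop_ _ A).
apply/eqP; apply: (@catsI_ _ (flatten (map tau y1))).
by rewrite E2 E1 -flat_take_split.
Qed.


Lemma main_irred X : ~ reducible X -> [::] \notin X -> sumlen X * sumlen X <= l ->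
  gen X W -> concl (size X).
Proof.
move=> Hred H0 HKl [s [A Es]].
have Hblk := blocks Hred H0 A Es HKl.
pose qq b := xchoose (Hblk b).
have Hq : forall b, all (fun z => z \in X) (qq b) && (flatten (qq b) == tau b).
  by move=> b; exact: (xchooseP (Hblk b)).
have HqX : forall b z, z \in qq b -> z \in X.
  by move=> b z Hz; have /andP[/allP Ha _] := Hq b; apply: Ha.
have Hqf : forall b, flatten (qq b) = tau b by move=> b; have /andP[_ /eqP] := Hq b.
have Hqn : forall b, qq b != [::].
  by move=> b; apply: contraNneq (Htau b) => E; rewrite -Hqf E.
have HKl' : sumlen X <= l.
  by apply: leq_trans HKl; case: (sumlen X) => // k; rewrite mulSn leq_addr.
pose fb b := head [::] (qq b).
pose lb b := last [::] (qq b).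
have Hfb : forall b b', fb b = fb b'.
  have key : forall b, fb b \in X /\ exists t, u = fb b ++ t.
    move=> b; have := Hqn b; rewrite /fb; case E: (qq b) => [|z r] // _ /=.
    have Hz : z \in X by apply: (HqX b); rewrite E in_cons eqxx.
    split => //; have /prefixP [r' Hr'] := Hpre b.
    have E2 : z ++ flatten r = u ++ r' by rewrite -Hr' -Hqf E.
    apply: (pre_cmp E2); rewrite Hu; apply: leq_trans HKl'.
    exact: size_le_sumlen.
  move=> b b'; have [X1 [t1 E1]] := key b; have [X2 [t2 E2]] := key b'.
  exact: (@prefix_eq _ X _ _ t1 t2 Hred H0 X1 X2 (etrans (esym E1) E2)).
have Hlb : forall b b', lb b = lb b'.
  have key : forall b, lb b \in X /\ exists t, v = t ++ lb b.
    move=> b; have := Hqn b; rewrite /lb; case E: (qq b) => [|z r] // _.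
    rewrite /=.
    have Hz : last z r \in X by apply: (HqX b); rewrite E mem_last.
    split => //; have /suffixP [r' Hr'] := Hsuf b.
    have E2 : flatten (belast z r) ++ last z r = r' ++ v.
      by rewrite -Hr' -Hqf E lastI flatten_rcons.
    apply: (suf_cmp E2); rewrite Hv; apply: leq_trans HKl'.
    exact: size_le_sumlen.
  move=> b b'; have [X1 [t1 E1]] := key b; have [X2 [t2 E2]] := key b'.
  exact: (@suffix_eq _ X _ _ t1 t2 Hred H0 X1 X2 (etrans (esym E1) E2)).
pose Z := undup (flatten (map qq (enum B))).
have HZ : forall z, (z \in Z) = [exists b, z \in qq b].
  move=> z; rewrite mem_undup; apply/flatten_mapP/existsP.
    by move=> [b _ Hb]; exists b.
  by move=> [b Hb]; exists b; rewrite ?mem_enum.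
have HZq : forall b z, z \in qq b -> z \in Z.
  by move=> b z Hz; rewrite HZ; apply/existsP; exists b.
have HZX : forall z, z \in Z -> z \in X.
  by move=> z; rewrite HZ => /existsP [b Hb]; apply: (HqX b).
have b0 : B by case: y Hy0 => // b0 _; exact: b0.
have HZ0 : 0 < size Z.
  have := Hqn b0; case E: (qq b0) => [|z r] // _.
  have Hz : z \in Z by apply: (HZq b0); rewrite E in_cons eqxx.
  by rewrite lt0n size_eq0; apply/eqP => EZ; move: Hz; rewrite EZ.
pose nZ := (size Z).-1.
have HnZ : nZ.+1 = size Z := prednK HZ0.
pose enc (z : seq C) : 'I_nZ.+1 := inord (index z Z).
pose p (d : 'I_nZ.+1) := nth [::] Z d.
pose q b := map enc (qq b).
have Hpe : forall z, z \in Z -> p (enc z) = z.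
  by move=> z Hz; rewrite /p /enc inordK ?nth_index // HnZ index_mem.
have Hmp : forall b, map p (q b) = qq b.
  move=> b; rewrite /q -map_comp -[RHS]map_id; apply/eq_in_map => z Hz /=.
  by apply: Hpe; exact: HZq Hz.
have HpZ : forall d, p d \in Z by move=> d; rewrite /p mem_nth // -HnZ.
exists ('I_nZ.+1), q, p; split.
- split.
    by move=> b; rewrite /q -size_eq0 size_map size_eq0; exact: Hqn.
  by move=> d; apply: contraNneq H0 => <-; apply: HZX.
- by rewrite card_ord HnZ; apply: uniq_leq_size; [exact: undup_uniq | move=> z; apply: HZX].
- elim=> [|b w IH] //; rewrite /mapw /= in IH *.
  by rewrite map_cat flatten_cat Hmp Hqf IH.
- move=> d; have := HpZ d; rewrite HZ => /existsP [b Hb]; exists b.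
  have <- : enc (p d) = d.
    by apply: val_inj; rewrite /enc /p index_uniq ?undup_uniq ?inord_val // -HnZ.
  exact: map_f.
- exists [:: enc (fb b0)], [:: enc (lb b0)]; split => // b; split.
    apply/prefixP; have := Hqn b; rewrite /q; case E: (qq b) => [|z r] // _.
    by exists (map enc r); rewrite -(Hfb b b0) /fb E.
  apply/suffixP; have := Hqn b; rewrite /q; case E: (qq b) => [|z r] // _.
  exists (map enc (belast z r)).
  by rewrite lastI map_rcons -cats1 -(Hlb b b0) /lb E.
Qed.

Lemma concl_mono m n : m <= n -> concl m -> concl n.
Proof.
move=> Hmn [D [q [p [H1 H2 H3 H4 H5]]]]; exists D, q, p; split => //.
exact: leq_trans Hmn.
Qed.

Lemma main_all n X : sumlen X <= n -> [::] \notin X -> sumlen X * sumlen X <= l ->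
  gen X W -> concl (size X).
Proof.
elim: n X => [|n IH] X Hn H0 HKl Hg.
  case: (classic (reducible X)) => Hr; last exact: main_irred.
  by case: Hr => Y [_ HY _ _]; move: Hn HY; rewrite leqn0 => /eqP ->.
case: (classic (reducible X)) => Hr; last exact: main_irred.
case: Hr => Y [HY1 HY2 HY3 HY4].
apply: (concl_mono HY1); apply: IH => //.
- by rewrite -ltnS; exact: leq_trans HY2 Hn.
- by apply: leq_trans HKl; apply: leq_mul; apply: ltnW.
- exact: gen_trans HY4 Hg.
Qed.

End Main.

Theorem lemma3p6 (A B C : finType) (phi : A -> seq C) (tau : B -> seq C)
    (l : nat) :
  is_morphism phi -> is_morphism tau ->
  r_proper l tau -> (size1 phi) ^ 4 <= l ->
  (exists (x : seq A) (y : seq B),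
      [/\ in_plus x, in_plusplus y & mapw phi x = mapw tau y]) ->
  exists (D : finType) (q : B -> seq D) (p : D -> seq C),
    [/\ is_morphism q /\ is_morphism p,
        #|D| <= #|A|,
        (forall w : seq B, mapw tau w = mapw p (mapw q w)),
        letter_onto q & proper_morph q].
Proof.
move=> Hphi Htau [u [v [Hu Hv Huv]]] Hl [x [y [_ [Hy0 Hy] Exy]]].
pose X0 := map phi (enum A).
have HS : sumlen X0 = size1 phi.
  by rewrite /sumlen /size1 /X0 -map_comp sumnE big_map big_enum.
have := @main_all B C tau l u v y Htau Hu Hv (fun b => (Huv b).1) (fun b => (Huv b).2)
  Hy0 Hy (sumlen X0) X0 (leqnn _).
rewrite /X0 size_map -cardT; apply.
- by apply/mapP => [[a _ Ea]]; move: (Hphi a); rewrite -Ea eqxx.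
- rewrite -/X0 HS; apply: leq_trans Hl.
  case: (size1 phi) => // k; rewrite !expnS expn0 muln1 mulnA.
  by apply: leq_pmulr; rewrite muln_gt0.
- exists (map phi x); split.
    by apply/allP => z /mapP [a _ ->]; apply: map_f; rewrite mem_enum.
  by rewrite /W; exact: Exy.
Qed.
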